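(* Let $G=(V,E)$ be a graph and $S\subseteq V$ with $|S|=k$ such that every connected component of $G-S$ is a clique or a tree; let $\mathcal{C}$ be the set of these components, and label the components as described in the context. Let $P$ be a cycle of $G$ with $P\cap S\neq\emptyset$, let $P_1,\dots,P_l$ be its fragments in the order they appear on $P$, and for each $i$ let $v_i\in S$ be such that $P_i$ is a $v_i$–$v_{i+1}$ path (indices modulo $l$). Then there is a cycle $P'$ of $G$ that decomposes into $l$ fragments $P'_1,\dots,P'_l$ such that each $P'_i$ is a $v_i$–$v_{i+1}$ path, the internal vertices of each $P'_i$ (if any) belong to a component labeled $(v_i,v_{i+1})$, and $|P|\le|P'|$.
   Context: $G$ is a simple undirected graph. A fragment of a cycle $P$ is a subpath of $P$ whose two endpoints lie in $S$ and which contains no other vertex of $S$. For (possibly equal) $u,v\in S$ and $C\in\mathcal{C}$ define $q(C,u,v)$: (i) if $N(u)\cap C=\emptyset$ or $N(v)\cap C=\emptyset$, $q(C,u,v)=-\infty$; (ii) if $C$ is a clique and $N(u)\cap C=N(v)\cap C=\{w\}$ for a single vertex $w$, $q(C,u,v)=2$; (iii) if $C$ is a clique and neither (i) nor (ii) holds, $q(C,u,v)=|C|+1$; (iv) if $C$ is a tree and (i) does not hold, $q(C,u,v)$ equals two plus the maximum, over $w_u\in N(u)\cap C$ and $w_v\in N(v)\cap C$, of the length of the $w_u$–$w_v$ path in $C$. Labeling: for each ordered pair (possibly equal) $u,v\in S$, among the components $C\in\mathcal{C}$ with $q(C,u,v)>0$, the $k$ with largest $q(C,u,v)$ (ties broken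 arbitrarily; all of them if fewer than $k$) receive the label $(u,v)$. A component may receive several labels. *)

(* Defs.v *)
From mathcomp Require Import all_boot.
Set Implicit Arguments. Unset Strict Implicit. Unset Printing Implicit Defensive.

Section Defs.
Variable T : finType.
Variable e : rel T.  (* simple undirected graph: symmetric, irreflexive *)

(* a cycle of G, given as the cyclic sequence of its distinct vertices;
   its length |P| is size P *)
Definition is_cycle (c : seq T) : bool := [&& 2 < size c, uniq c & cycle e c].

Definition outrel (S : {set T}) : rel T :=
  fun a b => [&& e a b, a \notin S & b \notin S].
Definition compOf (S : {set T}) (x : T) : {set T} :=
  [set y | connect (outrel S) x y].
Definition components (S : {set T}) : {set {set T}} :=
  [set compOf S x | x in ~: S].

Definition is_clique (C : {set T}) : bool :=
  [forall x in C, forall y in C, (x != y) ==> e x y].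

Definition inrel (C : {set T}) : rel T :=
  fun a b => [&& e a b, a \in C & b \in C].
Definition is_tree (C : {set T}) : Prop :=
  [/\ C != set0,
      (forall x y, x \in C -> y \in C -> connect (inrel C) x y) &
      ~ (exists c : seq T, is_cycle c /\ {subset c <= C})].

Definition cpath (C : {set T}) (a b : T) (s : seq T) : bool :=
  [&& head a s == a, last a s == b, path e a (behead s), uniq s,
      all (fun x => x \in C) s & s != [::]].

(* length (number of edges) of the a--b path in C (unique when G[C] is a tree) *)
Definition tpath_len (C : {set T}) (a b : T) : nat :=
  \max_(n < #|T|) (if [exists p : n.+1.-tuple T, cpath C a b p] then val n else 0).

Definition NC (C : {set T}) (u : T) : {set T} := [set y in C | e u y].

(* q(C,u,v); None encodes -infinity *)
Definition q (C : {set T}) (u v : T) : option nat :=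
  if (NC C u == set0) || (NC C v == set0) then None
  else if is_clique C then
    (if (NC C u == NC C v) && (#|NC C u| == 1) then Some 2 else Some (#|C|).+1)
  else Some (2 + \max_(a in NC C u) \max_(b in NC C v) tpath_len C a b).

Definition qpos (x : option nat) : bool := if x is Some n then 0 < n else false.
Definition qle (x y : option nat) : bool :=
  match x, y with
  | None, _ => true
  | Some _, None => false
  | Some m, Some n => m <= n
  end.

(* lab u v = the set of components receiving the label (u,v) *)
Definition valid_labeling (S : {set T}) (k : nat) (lab : T -> T -> {set {set T}})
  : Prop :=
  forall u v, u \in S -> v \in S ->
    let cand := [set C in components S | qpos (q C u v)] in
    [/\ lab u v \subset cand,
        #|lab u v| = minn k #|cand| &
        forall C C', C \in lab u v -> C' \in cand -> C' \notin lab u v ->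
          qle (q C' u v) (q C u v)].

(* fragment i runs from vs_i through the internal vertices ws_i to vs_(i+1 mod l) *)
Definition fragments_ok (S : {set T}) (lab : T -> T -> {set {set T}})
  (vs : seq T) (ws : seq (seq T)) : Prop :=
  forall u v w, ((u, v), w) \in zip (zip vs (rot 1 vs)) ws ->
    all (fun x => x \notin S) w /\
    (w != [::] -> exists2 C, C \in lab u v & {subset w <= C}).

End Defs.

(* Main.v *)
Require Import Defs.
From mathcomp Require Import all_boot.
Set Implicit Arguments. Unset Strict Implicit. Unset Printing Implicit Defensive.

Lemma count_rot_ (A : Type) (a : pred A) n (s : seq A) : count a (rot n s) = count a s.
Proof. by rewrite /rot count_cat addnC -count_cat cat_take_drop. Qed.

Lemma all_rot_ (A : Type) (a : pred A) n (s : seq A) : all a (rot n s) = all a s.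
Proof. by rewrite /rot all_cat andbC -all_cat cat_take_drop. Qed.

Lemma zip_drop_ (A B : Type) n (s : seq A) (t : seq B) :
  zip (drop n s) (drop n t) = drop n (zip s t).
Proof.
elim: n s t => [|n IH] [|x s] [|y t] //=; by case: (drop n _).
Qed.

Lemma zip_take_ (A B : Type) n (s : seq A) (t : seq B) :
  zip (take n s) (take n t) = take n (zip s t).
Proof.
elim: n s t => [|n IH] [|x s] [|y t] //=; try by case: (take n _).
by rewrite IH.
Qed.

Lemma zip_rot_ (A B : Type) n (s : seq A) (t : seq B) :
  size s = size t -> zip (rot n s) (rot n t) = rot n (zip s t).
Proof.
move=> H; rewrite /rot zip_cat ?size_drop ?H // zip_drop_ zip_take_ //.
Qed.

Lemma mem_zip2_ (A B : eqType) (s : seq A) (t : seq B) x y :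
  (x, y) \in zip s t -> y \in t.
Proof.
elim: s t => [|a s IH] [|b t] //=; rewrite !inE => /orP [/eqP [_ ->]|/IH ->];
  rewrite ?eqxx ?orbT //.
Qed.

Lemma filter_take_find_ (A : Type) (a : pred A) (s : seq A) :
  filter a (take (find a s) s) = [::].
Proof. by elim: s => //= x s IH; case ax: (a x) => //=; rewrite ax IH. Qed.


Lemma out_notS (T : finType) (e : rel T) (S : {set T}) x p :
  path (outrel e S) x p -> all (fun y => y \notin S) p.
Proof.
elim: p x => //= y p IH x /andP [/and3P [_ _ ->] /IH] //.
Qed.

Lemma comp_in (T : finType) (e : rel T) (S : {set T}) x : x \in compOf e S x.
Proof. by rewrite inE connect0. Qed.

Lemma comp_notS (T : finType) (e : rel T) (S : {set T}) x y :
  x \notin S -> y \in compOf e S x -> y \notin S.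
Proof.
move=> xS; rewrite inE => /connectP [p Hp ->].
have /allP H := out_notS Hp; case: p Hp H => //= z p _ H.
apply: H; exact: mem_last.
Qed.

Lemma outrel_sym (T : finType) (e : rel T) (S : {set T}) :
  symmetric e -> symmetric (outrel e S).
Proof. by move=> se a b; rewrite /outrel se; case: (e b a); case: (a \in S); case: (b \in S). Qed.

Lemma comp_same (T : finType) (e : rel T) (S : {set T}) x y :
  symmetric e -> y \in compOf e S x -> compOf e S y = compOf e S x.
Proof.
move=> se; rewrite inE => Hxy; apply/setP => z; rewrite !inE.
have cs := sym_connect_sym (outrel_sym S se).
by rewrite (same_connect cs Hxy).
Qed.

Lemma components_notS (T : finType) (e : rel T) (S : {set T}) C y :
  C \in components e S -> y \in C -> y \notin S.
Proof.
by move=> /imsetP [x]; rewrite inE => xS -> /(comp_notS xS).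
Qed.

Lemma path_out (T : finType) (e : rel T) (S : {set T}) x p :
  path e x p -> x \notin S -> all (fun y => y \notin S) p -> path (outrel e S) x p.
Proof.
elim: p x => //= y p IH x /andP [exy Hp] xS /andP [yS Hall].
by rewrite /outrel exy xS yS /= IH.
Qed.

Lemma frag_in_comp (T : finType) (e : rel T) (S : {set T}) a t :
  path e a t -> a \notin S -> all (fun y => y \notin S) t ->
  {subset a :: t <= compOf e S a}.
Proof.
move=> Hp aS Ht y Hy; rewrite inE.
exact: (path_connect (path_out Hp aS Ht) Hy).
Qed.

Lemma comp_mem (T : finType) (e : rel T) (S : {set T}) x :
  x \notin S -> compOf e S x \in components e S.
Proof. by move=> xS; apply: imset_f; rewrite inE. Qed.


Lemma uniq_head_last (T : eqType) (a : T) t : uniq (a :: t) -> last a t = a -> t = [::].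
Proof.
case: t => //= y t /andP [Ha _] Hl; move: Ha; rewrite -Hl.
by have := mem_last y t; rewrite inE => ->.
Qed.

Lemma tpath_len_ge (T : finType) (e : rel T) (C : {set T}) a t :
  path e a t -> uniq (a :: t) -> {subset a :: t <= C} ->
  size t <= tpath_len e C a (last a t).
Proof.
move=> Hp Hu Hs.
have Hlt : size t < #|T|.
  by have := max_card (mem (a :: t)); rewrite (card_uniqP Hu).
rewrite /tpath_len.
apply: leq_trans (leq_bigmax (Ordinal Hlt)) => /=.
have -> : [exists p : (size t).+1.-tuple T, cpath e C a (last a t) p] = true.
  apply/existsP; exists (in_tuple (a :: t)) => /=.
  rewrite /cpath /= !eqxx Hp /= andbT -/(uniq (a :: t)) Hu /=.
  by rewrite -/(all (fun x => x \in C) (a :: t)); apply/allP.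
by [].
Qed.

Lemma q_bound (T : finType) (e : rel T) (C : {set T}) u v a t :
  symmetric e ->
  e u a -> path e a t -> e (last a t) v -> uniq (a :: t) -> {subset a :: t <= C} ->
  exists2 n, q e C u v = Some n & (size t).+2 <= n.
Proof.
move=> se eua Hp elv Hu Hs.
have aC : a \in C by apply: Hs; rewrite inE eqxx.
have lC : last a t \in C by apply: Hs; exact: mem_last.
have aN : a \in NC e C u by rewrite inE aC eua.
have lN : last a t \in NC e C v by rewrite inE lC se elv.
rewrite /q.
have -> : (NC e C u == set0) = false by apply/negbTE/set0Pn; exists a.
have -> : (NC e C v == set0) = false by apply/negbTE/set0Pn; exists (last a t).
case: ifP => Hcl /=.
  case: ifP => [/andP [/eqP Heq /cards1P [x Hx]]|_].
    exists 2 => //.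
    move: aN lN; rewrite -Heq Hx !inE => /eqP ax /eqP lx.
    by rewrite (@uniq_head_last _ a t Hu) // lx ax.
  exists #|C|.+1 => //.
  have := subset_leq_card (A := mem (a :: t)) (B := mem C).
  rewrite (card_uniqP Hu) /= => H; rewrite ltnS; apply: H.
  by apply/subsetP.
exists (2 + \max_(a0 in NC e C u) \max_(b in NC e C v) tpath_len e C a0 b) => //.
rewrite add2n !ltnS. have H1 := tpath_len_ge Hp Hu Hs. 
apply: (bigmax_sup a) => //.
exact: (bigmax_sup (last a t)).
Qed.


Lemma clique_path (T : finType) (e : rel T) (C : {set T}) x s :
  is_clique e C -> x \in C -> all (fun y => y \in C) s -> uniq (x :: s) -> path e x s.
Proof.
move=> /forallP Hc; elim: s x => //= y s IH x xC /andP [yC Hs] /andP [Hx Hu].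
rewrite IH // andbT.
have := Hc x; rewrite xC /= => /forallP /(_ y); rewrite yC /= => /implyP; apply.
by apply: contra Hx => /eqP ->; rewrite inE eqxx.
Qed.

Lemma inrel_path (T : finType) (e : rel T) (C : {set T}) x p :
  path (inrel e C) x p -> path e x p /\ all (fun y => y \in C) p.
Proof.
elim: p x => //= y p IH x /andP [/and3P [exy _ yC] /IH [H1 H2]].
by rewrite exy yC H1 H2.
Qed.

Lemma q_build (T : finType) (e : rel T) (C : {set T}) u v n :
  symmetric e -> (is_clique e C \/ is_tree e C) -> q e C u v = Some n ->
  exists a t, [/\ e u a, path e a t, e (last a t) v, uniq (a :: t) &
                  {subset a :: t <= C} /\ n <= (size t).+2].
Proof.
move=> se Hct; rewrite /q.
case: ifP => // /norP [/set0Pn [a0 Ha0] /set0Pn [b0 Hb0]].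
case: ifP => Hcl.
  case: ifP => [/andP [/eqP Heq /cards1P [x Hx]] [<-]|Hneq [<-]].
    have xu : x \in NC e C u by rewrite Hx inE.
    have xv : x \in NC e C v by rewrite -Heq Hx inE.
    move: xu xv; rewrite !inE => /andP [xC eux] /andP [_ evx].
    exists x, [::]; split => //=; first by rewrite se.
    by split => // y; rewrite inE => /eqP ->.
  have [a [b [aN bN ab]]] : exists a b, [/\ a \in NC e C u, b \in NC e C v & a != b].
    case: (boolP (NC e C u == NC e C v)) => [/eqP Heq|Hne].
      move: Hneq; rewrite Heq eqxx /= => /negbT H1.
      have : 1 < #|NC e C v|.
        by rewrite ltn_neqAle eq_sym H1 card_gt0; apply/set0Pn; exists b0.
      by move=> /card_gt1P [x [y [Hx Hy Hxy]]]; exists x, y.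
    move: Hne; rewrite eqEsubset negb_and => /orP [/subsetPn [x xu xv]|/subsetPn [x xv xu]].
      by exists x, b0; split => //; apply: contra xv => /eqP ->.
    by exists a0, x; split => //; apply: contra xu => /eqP <-.
  move: aN bN; rewrite !inE => /andP [aC eua] /andP [bC evb].
  pose s := enum (C :\ a :\ b).
  have bs : b \notin s by rewrite mem_enum !inE eqxx.
  have as_ : a \notin s by rewrite mem_enum !inE eqxx andbF.
  have Hu : uniq (a :: rcons s b).
    rewrite /= -cats1 mem_cat negb_or as_ inE ab cat_uniq enum_uniq /=.
    by rewrite andbT orbF.
  have Hall : all (fun y => y \in C) (rcons s b).
    rewrite -cats1 all_cat /= bC !andbT; apply/allP => y.
    by rewrite mem_enum !inE => /and3P [_ _].
  exists a, (rcons s b); split => //.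
  - exact: (clique_path Hcl aC Hall Hu).
  - by rewrite last_rcons se.
  split.
  - move=> y; rewrite inE => /orP [/eqP ->//|]; exact: (allP Hall).
  - rewrite size_rcons /s -cardE.
    have := cardsD1 a C; rewrite aC (cardsD1 b (C :\ a)) !inE eq_sym ab bC /=.
    by move=> ->; rewrite add1n add1n.
case: Hct => [Hc|[_ Hconn _]]; first by rewrite Hc in Hcl.
move=> [<-].
have pu : 0 < #|NC e C u| by apply/card_gt0P; exists a0.
have pv : 0 < #|NC e C v| by apply/card_gt0P; exists b0.
have [a aN ->] := eq_bigmax_cond (fun a => \max_(b in NC e C v) tpath_len e C a b) pu.
have [b bN ->] := eq_bigmax_cond (fun b => tpath_len e C a b) pv.
move: aN bN; rewrite !inE => /andP [aC eua] /andP [bC evb].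
rewrite /tpath_len.
have pT : 0 < #|'I_#|T| | by rewrite card_ord; apply/card_gt0P; exists a.
have [i0 ->] := eq_bigmax (fun n : 'I_#|T| =>
   if [exists p : n.+1.-tuple T, cpath e C a b p] then val n else 0) pT.
case: existsP => [[p Hp]|_].
  move: (size_tuple p) Hp; case: (tval p) => [|x t] // [Hs].
  rewrite /cpath /= => /andP [/eqP xa /andP [/eqP lb /andP [Hpath /andP [Hu /andP [Hall _]]]]].
  subst x; exists a, t; split => //; first by rewrite lb se.
  split; last by rewrite Hs add2n.
  by move=> y Hy; have : all (fun z => z \in C) (a :: t) by []; move/allP; apply.
have [p Hp Hl] := connectP (Hconn a b aC bC).
case: (shortenP Hp) Hl => p' Hp' Hu Hsub Hl.
have [Hpe Hall] := inrel_path Hp'.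
exists a, p'; split => //; first by rewrite -Hl se.
split => //; move=> y; rewrite inE => /orP [/eqP ->//|]; exact: (allP Hall).
Qed.


Definition flat (T : Type) (fr : seq (T * seq T)) : seq T :=
  flatten [seq x.1 :: x.2 | x <- fr].

Definition triples (T : Type) (fr : seq (T * seq T)) :=
  zip (zip (map fst fr) (rot 1 (map fst fr))) (map snd fr).

Lemma flat_cons (T : Type) (u : T) w fr : flat ((u, w) :: fr) = u :: w ++ flat fr.
Proof. by []. Qed.

Lemma flat_rot (T : Type) i (fr : seq (T * seq T)) :
  flat (rot i fr) = rot (size (flat (take i fr))) (flat fr).
Proof.
rewrite /flat {1}/rot map_cat flatten_cat.
have -> : flatten [seq x.1 :: x.2 | x <- fr] = flatten [seq x.1 :: x.2 | x <- take i fr]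
   ++ flatten [seq x.1 :: x.2 | x <- drop i fr] by rewrite -flatten_cat -map_cat cat_take_drop.
by rewrite rot_size_cat.
Qed.

Lemma triples_rot (T : Type) i (fr : seq (T * seq T)) :
  triples (rot i fr) = rot i (triples fr).
Proof.
rewrite /triples !map_rot rot_rot zip_rot_ ?size_rot // zip_rot_ //.
by rewrite size_zip !size_rot !size_map minnn.
Qed.

Lemma triples_cons (T : Type) (u : T) w rest :
  triples ((u, w) :: rest) =
  ((u, head u (map fst rest)), w) ::
     zip (zip (map fst rest) (behead (rcons (map fst rest) u))) (map snd rest).
Proof. by rewrite /triples /= rot1_cons; case: rest => [|[v w'] r]. Qed.

Lemma cycle_split (T : Type) (e : rel T) u w R :
  cycle e (u :: w ++ R) =
  [&& path e u w, e (last u w) (head u R) & path e (head u R) (behead (rcons R u))].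
Proof.
rewrite /= rcons_cat cat_path; case: R => [|r R] /=; first by rewrite andbT.
by [].
Qed.

Lemma head_flat (T : Type) (u : T) rest : head u (flat rest) = head u (map fst rest).
Proof. by case: rest => [|[v w] r]. Qed.

Lemma flat_sorted (T : eqType) (e : rel T) a (fr : seq (T * seq T)) :
  path e a (flat fr) -> forall x, x \in fr -> sorted e x.2.
Proof.
elim: fr a => //= [[v w] r] IH a; rewrite -/(flat r) /= cat_path => /and3P [_ Hw Hr].
move=> x; rewrite inE => /orP [/eqP ->|Hx]; last exact: (IH _ Hr).
by case: w Hw {Hr} => //= b w /andP [].
Qed.

Lemma mem_flat (T : eqType) y (fr : seq (T * seq T)) :
  y \in flat fr -> y \in map fst fr \/ exists x, x \in fr /\ y \in x.2.
Proof.
elim: fr => //= [[v w] r] IH; rewrite flat_cons inE mem_cat.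
case/or3P => [H|H|/IH [H|[x [Hx Hy]]]].
- by left; rewrite inE H.
- by right; exists (v, w); split => //; rewrite inE eqxx.
- by left; rewrite inE H orbT.
- by right; exists x; split => //; rewrite inE Hx orbT.
Qed.

Lemma size_flat_cons (T : Type) (u : T) w fr :
  size (flat ((u, w) :: fr)) = (size w).+1 + size (flat fr).
Proof. by rewrite flat_cons /= size_cat. Qed.

Fixpoint dec (T : finType) (S : {set T}) (s : seq T) : seq T * seq (T * seq T) :=
  match s with
  | [::] => ([::], [::])
  | x :: t => let: (p, fr) := dec S t in
              if x \in S then ([::], (x, p) :: fr) else (x :: p, fr)
  end.

Lemma dec_spec (T : finType) (S : {set T}) s :
  [/\ (dec S s).1 ++ flat (dec S s).2 = s,
      map fst (dec S s).2 = filter (fun x => x \in S) s,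
      all (fun y => y \notin S) (dec S s).1 &
      all (fun x => all (fun y => y \notin S) x.2) (dec S s).2].
Proof.
elim: s => [|x t] //=; case: (dec S t) => p fr /= [H1 H2 H3 H4].
case: ifP => xS /=; first by rewrite flat_cons H1 H2 H3 H4.
by rewrite H1 H2 H3 xS.
Qed.


Definition goodb (T : finType) (lab : T -> T -> {set {set T}}) (t : (T * T) * seq T) : bool :=
  (t.2 == [::]) || [exists C, (C \in lab t.1.1 t.1.2) && all (fun y => y \in C) t.2].

Lemma step (T : finType) (e : rel T) (S : {set T}) (k : nat)
  (lab : T -> T -> {set {set T}}) (P : seq T) fr j :
  symmetric e -> #|S| = k ->
  (forall C, C \in components e S -> is_clique e C \/ is_tree e C) ->
  valid_labeling e S k lab -> uniq P ->
  fr != [::] -> j <= size (filter (fun x => x \in S) P) ->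
  map fst fr = rot j (filter (fun x => x \in S) P) ->
  all (fun x => all (fun y => y \notin S) x.2) fr ->
  uniq (flat fr) -> cycle e (flat fr) ->
  ~~ all (goodb lab) (triples fr) ->
  exists fr' j',
    [/\ fr' != [::], j' <= size (filter (fun x => x \in S) P),
        map fst fr' = rot j' (filter (fun x => x \in S) P),
        all (fun x => all (fun y => y \notin S) x.2) fr' &
        [/\ uniq (flat fr'), cycle e (flat fr'), size (flat fr) <= size (flat fr') &
            count (predC (goodb lab)) (triples fr') < count (predC (goodb lab)) (triples fr)]].
Proof.
move=> se Hk Hcomp Hval uP frn0 Hj Hfst Hall Hu Hc Hbad.
set X := filter (fun x => x \in S) P in Hj Hfst *.
have XS : {subset X <= S} by move=> x; rewrite mem_filter => /andP [].
have szX : size X <= k.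
  rewrite -Hk cardE; apply: uniq_leq_size; first exact: filter_uniq.
  by move=> x /XS; rewrite mem_enum.
have szfr : size (triples fr) = size fr by rewrite /triples !size_zip size_rot !size_map !minnn.
have Hhas : has (predC (goodb lab)) (triples fr) by rewrite has_predC.
set i := find (predC (goodb lab)) (triples fr).
have Hi : i < size fr by rewrite -szfr -has_find.
have Hi' : i <= size X by rewrite -(size_rot j) -Hfst size_map ltnW.
set fr1 := rot i fr.
have Ht1 : triples fr1 = rot i (triples fr) by rewrite triples_rot.
have Hsz1 : size fr1 = size fr by rewrite size_rot.
set j' := if i + j <= size X then i + j else i + j - size X.
have Hj' : j' <= size X.
  rewrite /j'; case: ifP => // _; rewrite leq_subLR.
  exact: leq_add.
have Hfst1 : map fst fr1 = rot j' X by rewrite /fr1 map_rot Hfst rot_add_mod.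
have Hall1 : all (fun x => all (fun y => y \notin S) x.2) fr1 by rewrite all_rot_.
have Hu1 : uniq (flat fr1) by rewrite /fr1 flat_rot rot_uniq.
have Hc1 : cycle e (flat fr1) by rewrite /fr1 flat_rot rot_cycle.
have Hs1 : size (flat fr1) = size (flat fr) by rewrite /fr1 flat_rot size_rot.
have Hcnt1 : count (predC (goodb lab)) (triples fr1) = count (predC (goodb lab)) (triples fr).
  by rewrite Ht1 count_rot_.
case E1 : fr1 Hsz1 Ht1 Hfst1 Hall1 Hu1 Hc1 Hs1 Hcnt1
  => [|[u w] rest] Hsz1 Ht1 Hfst1 Hall1 Hu1 Hc1 Hs1 Hcnt1.
  by move: Hi; rewrite -Hsz1.
set v' := head u (map fst rest).
have Hbadw : ~~ goodb lab ((u, v'), w).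
  have := nth_find ((u, u), [::]) Hhas; rewrite -/i /= => Hb.
  move: Ht1; rewrite triples_cons /rot (drop_nth ((u, u), [::])); last by rewrite szfr.
  by case=> -> _.
have fstS : {subset u :: map fst rest <= S}.
  by move=> x Hx; apply: XS; rewrite -(mem_rot j') -Hfst1.
have uS : u \in S by apply: fstS; rewrite inE eqxx.
have v'S : v' \in S.
  apply: fstS; rewrite /v' /=; case: (map fst rest) => [|y r] /=; rewrite !inE eqxx ?orbT //.
rewrite flat_cons in Hu1 Hc1 Hs1.
set R := flat rest in Hu1 Hc1 Hs1 *.
move: Hbadw; rewrite /goodb /= negb_or => /andP [wn0 /existsPn Hnot].
clear E1; move: Hsz1 Hfst1 => /= Hsz1 Hfst1. case: w wn0 Hnot Hall1 Hu1 Hc1 Hs1 Ht1 Hcnt1 => [//|a t] _ Hnot Hall1 Hu1 Hc1 Hs1 Ht1 Hcnt1.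
move: (Hc1); rewrite cycle_split head_flat -/v' /= => /and3P [/andP [eua Hpt] elv Htail].
move: Hall1 => /= /andP [/andP [aS tS] HallR].
move: (Hu1); rewrite cons_uniq cat_uniq => /andP [Hnu /and3P [Hut _ HuR]].
set C0 := compOf e S a.
have HwC0 : {subset a :: t <= C0} := frag_in_comp Hpt aS tS.
have C0comp : C0 \in components e S := comp_mem e aS.
have [n0 Hq0 Hn0] := q_bound se eua Hpt elv Hut HwC0.
have [Hsub Hcard Hcl3] := Hval u v' uS v'S.
set cand := [set C in components e S | qpos (q e C u v')] in Hsub Hcard Hcl3.
have C0cand : C0 \in cand by rewrite inE C0comp Hq0 /=; apply: leq_trans Hn0.
have C0lab : C0 \notin lab u v'.
  apply/negP => H; move: (Hnot C0); rewrite H /= => /negP; apply.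
  by apply/andP; split; [apply: HwC0; rewrite inE eqxx | apply/allP => y Hy; apply: HwC0; rewrite inE Hy orbT].
have labk : #|lab u v'| = k.
  have Hlt : #|lab u v'| < #|cand|.
    by apply: proper_card; apply/properP; split => //; exists C0.
  move: Hcard; rewrite /minn; case: ifP => // _ Hc'.
  by move: Hlt; rewrite Hc' ltnn.
set comps := [seq compOf e S (head u x.2) | x <- rest].
have szrest : (size rest).+1 <= k.
  have : size (u :: map fst rest) = size X by rewrite Hfst1 size_rot.
  by rewrite /= size_map => ->.
have [C CL Cnc] : exists2 C, C \in lab u v' & C \notin comps.
  have : ~~ (lab u v' \subset comps).
    apply/negP => Hs'; have := subset_leq_card Hs'; rewrite labk => Hk'.
    have := leq_trans Hk' (card_size comps); rewrite size_map => Hk''.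
    by move: (leq_ltn_trans Hk'' szrest); rewrite ltnn.
  by case/subsetPn => C CL Cnc; exists C.
have Ccand : C \in cand := subsetP Hsub C CL.
have Ccomp : C \in components e S by move: Ccand; rewrite inE => /andP [].
have := Hcl3 C C0 CL C0cand C0lab; rewrite Hq0.
case Hq : (q e C u v') => [n|] //= Hn0n.
have [a' [t' [eua' Hpt' elv' Hut' [HsubC Hnn]]]] := q_build se (Hcomp C Ccomp) Hq.
have notSC : forall y, y \in a' :: t' -> y \notin S.
  by move=> y Hy; apply: (components_notS Ccomp); exact: HsubC.
have Hsorted : forall x, x \in (u, a :: t) :: rest -> sorted e x.2.
  apply: (flat_sorted (a := last u (flat ((u, a :: t) :: rest)))).
  by rewrite -cycle_path flat_cons.
have disjR : forall y, y \in a' :: t' -> y \notin R.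
  move=> y Hy; apply/negP => /mem_flat [Hy'|[x [Hx Hyx]]].
    have : y \in S by apply: fstS; rewrite inE Hy' orbT.
    by rewrite (negbTE (notSC y Hy)).
  have Hxs : sorted e x.2 by apply: Hsorted; rewrite inE Hx orbT.
  have HxS : all (fun y => y \notin S) x.2 by exact: (allP HallR x Hx).
  move: Hyx Hxs HxS; case Ex : x.2 => [//|b s] Hyx Hxs /andP [bS sS].
  have Hyb : y \in compOf e S b by apply: (frag_in_comp Hxs bS sS).
  have HyC : y \in C by exact: HsubC.
  move: (Ccomp) => /imsetP [c _ Ec].
  have E2 : compOf e S b = C.
    rewrite -(comp_same se Hyb) Ec; apply: comp_same => //; by rewrite -Ec.
  move: Cnc; rewrite -E2 => /negP; apply.
  by apply/mapP; exists x => //; rewrite Ex.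
have g1 : goodb lab ((u, v'), a' :: t').
  rewrite /goodb /=; apply/existsP; exists C; rewrite CL /=.
  by apply/andP; split; [apply: HsubC; rewrite inE eqxx | apply/allP => y Hy; apply: HsubC; rewrite inE Hy orbT].
have g0 : ~~ goodb lab ((u, v'), a :: t).
  by rewrite /goodb /=; apply/existsPn.
exists ((u, a' :: t') :: rest), j'; split => //.
  apply/andP; split; last exact: HallR. apply/allP => y Hy; exact: notSC.
split.
- rewrite flat_cons -/R cons_uniq cat_uniq Hut' HuR andbT mem_cat negb_or.
  apply/andP; split; last apply/andP; last split.
  + apply/andP; split.
      by apply/negP => /notSC; rewrite uS.
    by move: Hnu; rewrite mem_cat negb_or => /andP [].
  + by [].
  + by apply/hasPn => y yR; apply/negP => /disjR; rewrite yR.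
- by rewrite flat_cons -/R cycle_split head_flat -/v' /= eua' Hpt' elv' Htail.
  rewrite -Hs1 flat_cons -/R /= !size_cat /= !ltnS leq_add2r.
  by move: (leq_trans Hn0 (leq_trans Hn0n Hnn)); rewrite !ltnS.
- rewrite -Hcnt1 !triples_cons -/v'.
  move: g1 g0; rewrite /goodb /= => -> /negbTE ->.
  by rewrite add0n add1n ltnSn.
Qed.


Lemma iterate (T : finType) (e : rel T) (S : {set T}) (k : nat)
  (lab : T -> T -> {set {set T}}) (P : seq T) m :
  symmetric e -> #|S| = k ->
  (forall C, C \in components e S -> is_clique e C \/ is_tree e C) ->
  valid_labeling e S k lab -> uniq P ->
  forall fr j,
  count (predC (goodb lab)) (triples fr) <= m ->
  fr != [::] -> j <= size (filter (fun x => x \in S) P) ->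
  map fst fr = rot j (filter (fun x => x \in S) P) ->
  all (fun x => all (fun y => y \notin S) x.2) fr ->
  uniq (flat fr) -> cycle e (flat fr) ->
  exists fr' j',
    [/\ map fst fr' = rot j' (filter (fun x => x \in S) P),
        all (fun x => all (fun y => y \notin S) x.2) fr',
        uniq (flat fr'), cycle e (flat fr') &
        size (flat fr) <= size (flat fr') /\ all (goodb lab) (triples fr')].
Proof.
move=> se Hk Hcomp Hval uP; elim: m => [|m IH] fr j Hm Hn0 Hj Hf Ha Hu Hc.
  exists fr, j; split => //; split => //.
  apply/negPn/negP => Hb; move: Hm; rewrite leqn0 => /eqP Hc0.
  by move: Hb; rewrite -has_predC has_count Hc0.
case: (boolP (all (goodb lab) (triples fr))) => Hg.
  by exists fr, j; split => //; split.
have [fr1 [j1 [H1 H2 H3 H4 [H5 H6 H7 H8]]]] := step se Hk Hcomp Hval uP Hn0 Hj Hf Ha Hu Hc Hg.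
have Hm1 : count (predC (goodb lab)) (triples fr1) <= m by rewrite -ltnS (leq_trans H8 Hm).
have [fr2 [j2 [G1 G2 G3 G4 [G5 G6]]]] := IH fr1 j1 Hm1 H1 H2 H3 H4 H5 H6.
exists fr2, j2; split => //; split => //; exact: leq_trans G5.
Qed.


Theorem mainTheorem18 (T : finType) (e : rel T) (S : {set T}) (k : nat)
  (lab : T -> T -> {set {set T}}) (P : seq T) :
  symmetric e -> irreflexive e -> #|S| = k ->
  (forall C, C \in components e S -> is_clique e C \/ is_tree e C) ->
  valid_labeling e S k lab ->
  is_cycle e P -> has (fun x => x \in S) P ->
  exists (P' : seq T) (vs : seq T) (ws : seq (seq T)) (j : nat),
    [/\ is_cycle e P',
        P' = flatten [seq x.1 :: x.2 | x <- zip vs ws],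
        size ws = size vs,
        vs = rot j [seq x <- P | x \in S] &
        fragments_ok S lab vs ws /\ size P <= size P'].
Proof.
move=> se _ Hk Hcomp Hval /and3P [szP uP cP] hasS.
set s0 := find (fun x => x \in S) P.
have Hs0 : s0 < size P by rewrite -has_find.
have [x0 _ _] := hasP hasS.
set P1 := rot s0 P.
have HP1 : P1 = nth x0 P s0 :: drop s0.+1 P ++ take s0 P by rewrite /P1 /rot (drop_nth x0).
have xS : nth x0 P s0 \in S by exact: nth_find.
have Hfilt : filter (fun x => x \in S) P1 = filter (fun x => x \in S) P.
  rewrite /P1 /rot filter_cat filter_take_find_ cats0.
  by rewrite -{2}(cat_take_drop s0 P) filter_cat filter_take_find_.
have [D1 D2 D3 D4] := dec_spec S P1.
have Hd1 : (dec S P1).1 = [::].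
  by rewrite HP1 /=; case: (dec S _) => p fr; rewrite xS.
rewrite Hd1 /= in D1.
set fr0 := (dec S P1).2 in D1 D2 D3 D4.
have Hn0 : fr0 != [::].
  apply/negP => /eqP E0; move: D2 hasS; rewrite E0 Hfilt has_filter /= => <-. by [].

have Hu0 : uniq (flat fr0) by rewrite D1 rot_uniq.
have Hc0 : cycle e (flat fr0) by rewrite D1 rot_cycle.
have [fr' [j' [G1 G2 G3 G4 [G5 G6]]]] :=
  iterate (m := count (predC (goodb lab)) (triples fr0)) se Hk Hcomp Hval uP
    (leqnn _) Hn0 (leq0n _) (etrans (etrans D2 Hfilt) (esym (rot0 _))) D4
    Hu0 Hc0.
have szP' : size P <= size (flat fr').
  by apply: leq_trans G5; rewrite D1 size_rot.
exists (flat fr'), (map fst fr'), (map snd fr'), j'; split.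
- by rewrite /is_cycle G3 G4 (leq_trans szP szP').
- by rewrite /flat; have := zip_unzip fr'; rewrite /unzip1 /unzip2 => ->.
- by rewrite !size_map.
- exact: G1.
split => //.
move=> u v w Hin.
have Hg : goodb lab ((u, v), w) by apply: (allP G6).
have Hw : w \in map snd fr' by apply: (mem_zip2_ Hin).
split.
  by case/mapP: Hw => x Hx ->; exact: (allP G2 x Hx).
move: Hg; rewrite /goodb /= => /orP [/eqP ->//|/existsP [C /andP [HC Hall]]] _.
by exists C => // y Hy; exact: (allP Hall).
Qed.
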